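(* (a) Let $\Gamma$ be a perfect matching drawing containing a matching edge $e=uv$ inside a disk $D$ that meets $\Gamma$ only in $e$, its endpoints, and initial segments of the four other edges at $u$ and $v$. Let the edge-ends of these other edges be $\alpha,\beta$ at $u$ and $\gamma,\delta$ at $v$, in cyclic order $\alpha,\beta,\delta,\gamma$ around $\partial D$. Let $\Gamma_H$ be obtained by the IH-move at $e$: inside $D$, replace $u,v,e$ by new vertices $u',v'$ and a new matching edge $e'=u'v'$, with $\alpha,\gamma$ attached to $u'$ and $\beta,\delta$ attached to $v'$. Let $\Gamma_{\mathrm{I}}$ be obtained from $\Gamma$ by replacing the contents of $D$ with two disjoint arcs joining $\alpha$ to $\gamma$ and $\beta$ to $\delta$, and let $\Gamma_{=}$ be obtained by replacing the contents of $D$ with two disjoint arcs joining $\alpha$ to $\beta$ and $\gamma$ to $\delta$. Then $$\langle\Gamma\rangle_2-\langle\Gamma_H\rangle_2=\langle\Gamma_{\mathrm{I}}\rangle_2-\langle\Gamma_{=}\rangle_2.$$ (b) Let $G_1$ be a planar trivalent graph with perfect matching $M_1$, and perform the same local constructions on a plane embedding, at a matching edge $e=uv$ as in (a), producing a plane graph $G_2$ with perfect matching $M_2=(M_1\setminus\{e\})\cup\{e'\}$ (the IH-move), a plane graph $G_3$ (delete $u,v,e$ and join the edges ending in $\alpha,\gamma$ into one edge and the edges ending in $\beta,\delta$ into one edge) with perfect matching $M_3=M_1\setminus\{e\}$, and a plane graph $G_4$ (delete $u,v,e$ and join the edges ending in $\alpha,\beta$ into one edge and those ending in $\gamma,\delta$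 into one edge) with perfect matching $M_4=M_1\setminus\{e\}$. Then $$|G_1:M_1|_2-|G_2:M_2|_2=|G_3:M_3|_2-|G_4:M_4|_2.$$
   Context: Graphs are finite and may have multiple edges; trivalent means every vertex has degree $3$. $|G:M|_2$ denotes the number of $2$-factors (spanning subgraphs in which every vertex has degree $2$) of $G$ that contain every edge of $M$. A perfect matching drawing $\Gamma$ is a collection of trivalent vertices, edges and vertex-free closed curves drawn in the $2$-sphere by a generic immersion (transverse double points away from vertices, carrying no extra data), together with a set $M$ of edges forming a perfect matching of the vertices. For a matching edge $e=uv$ with other edge-ends $\alpha,\beta$ at $u$ and $\gamma,\delta$ at $v$ in cyclic order $\alpha,\beta,\delta,\gamma$ around a small disk about $e$, the $0$-resolution deletes $e,u,v$ and joins $\alpha$–$\gamma$ and $\beta$–$\delta$ by disjoint arcs, and the $1$-resolution joins $\alpha$–$\delta$ and $\beta$–$\gamma$ by two arcs crossing once. For a state $s:M\to\{0,1\}$, resolving every matching edge gives $c(s)$ immersed closed curves, and the $2$-factor bracket is $\langle\Gamma\rangle_2(z)=\sum_s(-z)^{|s|}(z+z^{-1})^{c(s)}\in\mathbb{Z}[z,z^{-1}]$, $|s|$ being the number of edges assigned $1$. *)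

(* Defs.v *)
From HB Require Import structures.
From mathcomp Require Import all_boot all_order all_algebra.
Set Implicit Arguments. Unset Strict Implicit. Unset Printing Implicit Defensive.
Import GRing.Theory.

(* N : finType indexes the matching edges.  Every matching edge e = uv has  *)
(* four outer edge-ends ("ports"), labelled by 'I_4 in the cyclic order     *)
(* alpha, beta, delta, gamma around a small disk about e:                   *)
(*   port 0 = alpha (at u), 1 = beta (at u), 2 = delta (at v), 3 = gamma (v)*)
(* A dart is a pair (n, p).  The non-matching edges pair darts:             *)
(* ed : dart -> dart is a fixed-point-free involution (ed x = other end of  *)
(* the edge through x; a loop at u pairs (n,0) with (n,1), etc.).           *)
(* Vertex-free closed curves are counted by a natural number k.             *)
(* Crossings carry no data and therefore do not appear.                     *)

Definition dart (N : finType) := (N * 'I_4)%type.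

Definition pA : 'I_4 := inord 0.
Definition pB : 'I_4 := inord 1.
Definition pD : 'I_4 := inord 2.
Definition pG : 'I_4 := inord 3.

Definition pm_drawing (N : finType) (ed : dart N -> dart N) : Prop :=
  involutive ed /\ (forall x, ed x != x).

(* 0-resolution: alpha--gamma, beta--delta *)
Definition res0 (p : 'I_4) : 'I_4 := inord (3 - p).
(* 1-resolution: alpha--delta, beta--gamma (two arcs crossing once) *)
Definition res1 (p : 'I_4) : 'I_4 := inord ((p + 2) %% 4).
(* alpha--beta, gamma--delta *)
Definition pairEq (p : 'I_4) : 'I_4 := inord (if odd p then p.-1 else p.+1).

(* Closed curves obtained when every matching edge n is replaced, inside   *)
(* its disk, by the arcs pairing its ports according to pr n: they are the *)
(* connected components of the graph on darts whose edges are the          *)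
(* non-matching edges (ed) and the local arcs (pr).                        *)
Definition curve_rel (N : finType) (ed : dart N -> dart N)
  (pr : N -> 'I_4 -> 'I_4) : rel (dart N) :=
  fun x y => (ed x == y) || ((y.1 == x.1) && (y.2 == pr x.1 x.2)).

Definition ncurves (N : finType) (ed : dart N -> dart N)
  (pr : N -> 'I_4 -> 'I_4) : nat :=
  n_comp (curve_rel ed pr) (@predT (dart N)).

Definition state_pairing (N : finType) (s : {ffun N -> bool}) (n : N) :=
  if s n then res1 else res0.

(* The 2-factor bracket <Gamma>_2, evaluated in any commutative ring R at  *)
(* z with inverse zi (take R = Z[z,z^-1] for the Laurent polynomial).      *)
Definition bracket2 (R : comNzRingType) (z zi : R) (N : finType)
  (ed : dart N -> dart N) (k : nat) : R :=
  (\sum_(s : {ffun N -> bool})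
     ((- z) ^+ #|[set n | s n]| * (z + zi) ^+ (ncurves ed (state_pairing s) + k))%R)%R.

(* Bracket of the drawing obtained by replacing the contents of the disk   *)
(* about the matching edge e by two disjoint arcs pairing the ports        *)
(* according to a (e is no longer a matching edge, so no state on e).      *)
Definition bracket2_arcs (R : comNzRingType) (z zi : R) (N : finType)
  (ed : dart N -> dart N) (k : nat) (e : N) (a : 'I_4 -> 'I_4) : R :=
  (\sum_(s : {ffun N -> bool} | ~~ s e)
     ((- z) ^+ #|[set n | s n]|
       * (z + zi) ^+ (ncurves ed (fun n => if n == e then a else state_pairing s n) + k))%R)%R.

(* IH-move at e.  The new matching edge e' = u'v' has alpha, gamma at u'   *)
(* and beta, delta at v'; in the cyclic order (alpha,beta,delta,gamma)     *)
(* around the disk its own ports are alpha' = gamma, beta' = alpha,        *)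
(* delta' = beta, gamma' = delta, i.e. new port q is old port q-1 mod 4.   *)
Definition ih_new2old (q : 'I_4) : 'I_4 := inord ((q + 3) %% 4).
Definition ih_old2new (p : 'I_4) : 'I_4 := inord ((p + 1) %% 4).
Definition ih_ed (N : finType) (e : N) (ed : dart N -> dart N) : dart N -> dart N :=
  fun x =>
    let x' := if x.1 == e then (x.1, ih_new2old x.2) else x in
    let y := ed x' in
    if y.1 == e then (y.1, ih_old2new y.2) else y.

(* Trivalent graphs with a perfect matching, same dart model (k = 0).      *)
(* Vertices are u_n (ports 0,1) and v_n (ports 2,3) of each matching edge  *)
(* n; non-matching edges are the ed-orbits.  A spanning subgraph containing *)
(* the matching is a set S of darts closed under ed (the chosen non-      *)
(* matching edges); it is a 2-factor iff each vertex has exactly one of    *)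
(* its two non-matching edge-ends in S.  A node n with pr n = Some a is not *)
(* a matching edge: its two vertices and e are deleted and the edges at    *)
(* ports p and a p are joined into one edge.                               *)
Definition is_2factor (N : finType) (ed : dart N -> dart N)
  (pr : N -> option ('I_4 -> 'I_4)) (S : {set dart N}) : bool :=
  [forall x, (x \in S) == (ed x \in S)] &&
  [forall n, match pr n with
             | None => (((n, pA) \in S) != ((n, pB) \in S))
                       && (((n, pD) \in S) != ((n, pG) \in S))
             | Some a => [forall p, ((n, p) \in S) == ((n, a p) \in S)]
             end].

Definition n2factors (N : finType) (ed : dart N -> dart N)
  (pr : N -> option ('I_4 -> 'I_4)) : nat :=
  #|[set S : {set dart N} | is_2factor ed pr S]|.

Definition all_matching (N : finType) : N -> option ('I_4 -> 'I_4) := fun _ => None.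
Definition arcs_at (N : finType) (e : N) (a : 'I_4 -> 'I_4) : N -> option ('I_4 -> 'I_4) :=
  fun n => if n == e then Some a else None.

(* Main.v *)
Require Import Defs.
From mathcomp Require Import all_boot all_order all_algebra.
Import GRing.Theory.
From mathcomp Require Import zify.
Lemma inord4 (k : nat) (H : k < 4) : inord k = Ordinal H :> 'I_4.
Proof. by apply/val_inj; rewrite /= inordK. Qed.
Ltac i4 := let p := fresh "p" in move=> p; apply/eqP; case: p => [[|[|[|[|m]]]] Hp] //;
  rewrite /ih_new2old /ih_old2new /res0 /res1 /pairEq /= ?inord4 //= ?inord4 //= ?inord4 //= ?inord4 //=.
Lemma n2o_o2n : cancel ih_old2new ih_new2old.
Proof. i4. Qed.
Lemma o2n_n2o : cancel ih_new2old ih_old2new.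
Proof. i4. Qed.
Lemma res0_inv : involutive res0.
Proof. i4. Qed.
Lemma res1_inv : involutive res1.
Proof. i4. Qed.
Lemma pairEq_inv : involutive pairEq.
Proof. i4. Qed.
Lemma conj_res1 p : res1 p = ih_new2old (res1 (ih_old2new p)).
Proof. move: p; i4. Qed.
Lemma conj_res0 p : pairEq p = ih_new2old (res0 (ih_old2new p)).
Proof. move: p; i4. Qed.

Lemma curve_sym (N : finType) (ed : dart N -> dart N) (edK : involutive ed) (pr : N -> 'I_4 -> 'I_4) : (forall n, involutive (pr n)) ->
  symmetric (curve_rel ed pr).
Proof.
move=> prK [n p] [m q]; rewrite /curve_rel /=; congr orb.
  by apply/eqP/eqP => <-; rewrite edK.
have [->|/negPf nm] := eqVneq m n; last by [].
by apply/eqP/eqP => ->; rewrite prK.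
Qed.

Section Curves.
Variables (N : finType) (ed : dart N -> dart N) (e : N).
Hypothesis edK : involutive ed.

Definition phi (x : dart N) : dart N := if x.1 == e then (x.1, ih_new2old x.2) else x.
Definition phiinv (x : dart N) : dart N := if x.1 == e then (x.1, ih_old2new x.2) else x.
Lemma phi_unused : True. Proof. by []. Qed.
Lemma phiK : cancel phi phiinv.
Proof. by case=> n p; rewrite /phi /phiinv /=; case: (eqVneq n e) => [->|/negPf ne] /=; rewrite ?eqxx ?ne ?n2o_o2n ?o2n_n2o. Qed.
Lemma phiinvK : cancel phiinv phi.
Proof. by case=> n p; rewrite /phi /phiinv /=; case: (eqVneq n e) => [->|/negPf ne] /=; rewrite ?eqxx ?ne ?n2o_o2n ?o2n_n2o. Qed.
Lemma ih_edE x : ih_ed e ed x = phiinv (ed (phi x)).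
Proof. by []. Qed.



Lemma ncurves_ext (pr1 pr2 : N -> 'I_4 -> 'I_4) : (forall n p, pr1 n p = pr2 n p) ->
  ncurves ed pr1 = ncurves ed pr2.
Proof.
move=> H; rewrite /ncurves; apply: eq_n_comp; apply: eq_connect => x y.
by rewrite /curve_rel H.
Qed.

Lemma ncurves_ih (pr pr' : N -> 'I_4 -> 'I_4) :
  (forall n, involutive (pr n)) -> (forall n, involutive (pr' n)) ->
  (forall n, n != e -> forall p, pr n p = pr' n p) ->
  (forall p, pr e p = ih_new2old (pr' e (ih_old2new p))) ->
  ncurves (ih_ed e ed) pr' = ncurves ed pr.
Proof.
move=> prK pr'K Hne He.
have ihK : involutive (ih_ed e ed).
  by move=> x; rewrite !ih_edE phiinvK edK phiK.
have symA := sym_connect_sym ((@curve_sym N ed edK pr prK)).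
have symB := @sym_connect_sym _ (curve_rel (ih_ed e ed) pr')
   (@curve_sym N _ ihK pr' pr'K).
rewrite /ncurves (@adjunction_n_comp _ _ phi _ _ symA symB predT) //.
apply: strict_adjunction => //.
- exact: can_inj phiK.
- by apply/subsetP => x _; rewrite -(phiinvK x) codom_f.
move=> [n p] [m q] _; rewrite /curve_rel ih_edE /=.
congr orb.
  by rewrite -(inj_eq (can_inj phiinvK)) phiK.
have phi1 x : (phi x).1 = x.1 by rewrite /phi; case: ifP.
rewrite !phi1 /=; have [->|nm] := eqVneq m n; last by [].
have [->|ne] := eqVneq n e.
  by rewrite /phi /= eqxx /= He o2n_n2o (inj_eq (can_inj o2n_n2o)).
by rewrite /phi /= (negPf ne) /= Hne.
Qed.
End Curves.

Lemma forall4 (P : pred 'I_4) : [forall p, P p] = [&& P pA, P pB, P pD & P pG].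
Proof.
apply/forallP/and4P => [H|[h0 h1 h2 h3] p]; first by split; apply: H.
have -> : p = inord p by rewrite inord_val.
by case: p => [[|[|[|[|m]]]] Hp].
Qed.

Ltac vi4 := apply/val_inj; rewrite /res0 /pairEq /ih_new2old /pA /pB /pD /pG /= ?inord4 //= ?inord4 //= ?inord4 //= ?inord4 //=.
Lemma res0A : res0 pA = pG. Proof. vi4. Qed.
Lemma res0B : res0 pB = pD. Proof. vi4. Qed.
Lemma res0D : res0 pD = pB. Proof. vi4. Qed.
Lemma res0G : res0 pG = pA. Proof. vi4. Qed.
Lemma peqA : pairEq pA = pB. Proof. vi4. Qed.
Lemma peqB : pairEq pB = pA. Proof. vi4. Qed.
Lemma peqD : pairEq pD = pG. Proof. vi4. Qed.
Lemma peqG : pairEq pG = pD. Proof. vi4. Qed.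
Lemma n2oA : ih_new2old pA = pG. Proof. vi4. Qed.
Lemma n2oB : ih_new2old pB = pA. Proof. vi4. Qed.
Lemma n2oD : ih_new2old pD = pB. Proof. vi4. Qed.
Lemma n2oG : ih_new2old pG = pD. Proof. vi4. Qed.

Section PartB.
Variables (N : finType) (ed : dart N -> dart N) (e : N).
Hypothesis edK : involutive ed.

Definition cl (T : {set dart N}) := [forall x, (x \in T) == (ed x \in T)].
Definition rest (T : {set dart N}) :=
  [forall n, (n != e) ==> ((((n, pA) \in T) != ((n, pB) \in T))
                       && (((n, pD) \in T) != ((n, pG) \in T)))].

Lemma forall_split (P : pred N) (Q : pred N) :
  (forall n, n != e -> P n = Q n) ->
  [forall n, P n] = P e && [forall n, (n != e) ==> Q n].
Proof.
move=> PQ; apply/forallP/andP => [H|[He H] n].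
  split; first exact: H.
  by apply/forallP => n; apply/implyP => ne; rewrite -PQ.
have [->|ne] := eqVneq n e => //.
by rewrite PQ //; exact: (implyP (forallP H n) ne).
Qed.

Let a (T : {set dart N}) := (e, pA) \in T.
Let b (T : {set dart N}) := (e, pB) \in T.
Let d (T : {set dart N}) := (e, pD) \in T.
Let g (T : {set dart N}) := (e, pG) \in T.

Lemma f1E T : is_2factor ed (@all_matching N) T = [&& cl T, (a T != b T) && (d T != g T) & rest T].
Proof. by rewrite /is_2factor (@forall_split _ (fun n => ((((n, pA) \in T) != ((n, pB) \in T))
                       && (((n, pD) \in T) != ((n, pG) \in T))))). Qed.

Lemma f3E T : is_2factor ed (arcs_at e res0) T = [&& cl T, (a T == g T) && (b T == d T) & rest T].
Proof.
rewrite /is_2factor (@forall_split _ (fun n => ((((n, pA) \in T) != ((n, pB) \in T))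
                       && (((n, pD) \in T) != ((n, pG) \in T))))); last first.
  by move=> n ne; rewrite /arcs_at (negPf ne).
rewrite /arcs_at eqxx forall4 res0A res0B res0D res0G /a /b /d /g.
by case: ((e,pA) \in T); case: ((e,pB) \in T); case: ((e,pD) \in T); case: ((e,pG) \in T);
  rewrite /= ?andbF.
Qed.

Lemma f4E T : is_2factor ed (arcs_at e pairEq) T = [&& cl T, (a T == b T) && (d T == g T) & rest T].
Proof.
rewrite /is_2factor (@forall_split _ (fun n => ((((n, pA) \in T) != ((n, pB) \in T))
                       && (((n, pD) \in T) != ((n, pG) \in T))))); last first.
  by move=> n ne; rewrite /arcs_at (negPf ne).
rewrite /arcs_at eqxx forall4 peqA peqB peqD peqG /a /b /d /g.
by case: ((e,pA) \in T); case: ((e,pB) \in T); case: ((e,pD) \in T); case: ((e,pG) \in T);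
  rewrite /= ?andbF.
Qed.

Definition Psi (T : {set dart N}) : {set dart N} := [set x | phi N e x \in T].
Definition Phi (T : {set dart N}) : {set dart N} := [set x | phiinv N e x \in T].
Lemma PsiK : cancel Psi Phi.
Proof. by move=> T; apply/setP => x; rewrite !inE phiinvK. Qed.
Lemma PhiK : cancel Phi Psi.
Proof. by move=> T; apply/setP => x; rewrite !inE phiK. Qed.

Lemma f2E T : is_2factor (ih_ed e ed) (@all_matching N) (Psi T) =
   [&& cl T, (g T != a T) && (b T != d T) & rest T].
Proof.
rewrite /is_2factor (@forall_split _ (fun n => ((((n, pA) \in T) != ((n, pB) \in T))
                       && (((n, pD) \in T) != ((n, pG) \in T))))); last first.
  by move=> n ne; rewrite /all_matching !inE /phi /= (negPf ne).
rewrite /all_matching !inE /phi /= eqxx n2oA n2oB n2oD n2oG.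
congr andb.
apply/forallP/forallP => H x.
  have := H (phiinv N e x); rewrite !inE ih_edE !phiinvK.
  by [].
by rewrite !inE ih_edE phiinvK; apply: H.
Qed.

End PartB.

Lemma arith (R : zmodType) (A1 A2 B1 B2 X Y : R) :
  A2 = A1 -> B1 = X -> B2 = Y -> ((A1 + B1) - (A2 + B2) = X - Y)%R.
Proof. by move=> -> -> ->; rewrite opprD addrACA subrr add0r. Qed.

Local Open Scope ring_scope.

Theorem lemma2p3 (N : finType) (ed : dart N -> dart N) (e : N) :
  pm_drawing ed ->
  (* (a) *)
  (forall (R : comNzRingType) (z zi : R) (k : nat), z * zi = 1 ->
     bracket2 z zi ed k - bracket2 z zi (ih_ed e ed) k
     = bracket2_arcs z zi ed k e res0 - bracket2_arcs z zi ed k e pairEq)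
  /\
  (* (b) *)
  ((n2factors ed (@all_matching N))%:Z - (n2factors (ih_ed e ed) (@all_matching N))%:Z
   = (n2factors ed (arcs_at e res0))%:Z - (n2factors ed (arcs_at e pairEq))%:Z).
Proof.
move=> [edK _]; split.
  move=> R z zi k _.
  have spK (s : {ffun N -> bool}) n : involutive (state_pairing s n).
    by rewrite /state_pairing; case: (s n); [exact: res1_inv | exact: res0_inv].
  have sp (F : {ffun N -> bool} -> R) : \sum_(s : {ffun N -> bool}) F s = \sum_(s : {ffun N -> bool} | s e) F s + \sum_(s : {ffun N -> bool} | ~~ s e) F s.
    by rewrite (bigID (fun s : {ffun N -> bool} => s e) predT).
  have S1 : bracket2 z zi ed k = \sum_(s : {ffun N -> bool} | s e)
      ((- z) ^+ #|[set n | s n]| * (z + zi) ^+ (ncurves ed (state_pairing s) + k))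
    + \sum_(s : {ffun N -> bool} | ~~ s e)
      ((- z) ^+ #|[set n | s n]| * (z + zi) ^+ (ncurves ed (state_pairing s) + k)).
    exact: (sp (fun s => (- z) ^+ #|[set n | s n]| * (z + zi) ^+ (ncurves ed (state_pairing s) + k))).
  have S2 : bracket2 z zi (ih_ed e ed) k = \sum_(s : {ffun N -> bool} | s e)
      ((- z) ^+ #|[set n | s n]| * (z + zi) ^+ (ncurves (ih_ed e ed) (state_pairing s) + k))
    + \sum_(s : {ffun N -> bool} | ~~ s e)
      ((- z) ^+ #|[set n | s n]| * (z + zi) ^+ (ncurves (ih_ed e ed) (state_pairing s) + k)).
    exact: (sp (fun s => (- z) ^+ #|[set n | s n]| * (z + zi) ^+ (ncurves (ih_ed e ed) (state_pairing s) + k))).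
  rewrite S1 S2.
  have E1 : \sum_(s : {ffun N -> bool} | s e)
      ((- z) ^+ #|[set n | s n]| * (z + zi) ^+ (ncurves (ih_ed e ed) (state_pairing s) + k))
    = \sum_(s : {ffun N -> bool} | s e)
      ((- z) ^+ #|[set n | s n]| * (z + zi) ^+ (ncurves ed (state_pairing s) + k)).
    apply: eq_bigr => s se; rewrite (@ncurves_ih N ed e edK (state_pairing s)) //.
    by move=> p; rewrite /state_pairing se conj_res1.
  have E2 : \sum_(s : {ffun N -> bool} | ~~ s e)
      ((- z) ^+ #|[set n | s n]| * (z + zi) ^+ (ncurves ed (state_pairing s) + k))
    = bracket2_arcs z zi ed k e res0.
    rewrite /bracket2_arcs; apply: eq_bigr => s se.
    rewrite (@ncurves_ext N ed _ (fun n => if n == e then res0 else state_pairing s n)); first by [].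
    move=> n p; case: eqP => [->|_]; last by [].
    by rewrite /state_pairing (negPf se).
  have E3 : \sum_(s : {ffun N -> bool} | ~~ s e)
      ((- z) ^+ #|[set n | s n]| * (z + zi) ^+ (ncurves (ih_ed e ed) (state_pairing s) + k))
    = bracket2_arcs z zi ed k e pairEq.
    rewrite /bracket2_arcs; apply: eq_bigr => s se.
    rewrite (@ncurves_ih N ed e edK (fun n => if n == e then pairEq else state_pairing s n) (state_pairing s)); first by [].
    - by move=> n; case: eqP => _; [exact: pairEq_inv | exact: spK].
    - exact: spK.
    - by move=> n /negPf ->.
    - by move=> p; rewrite eqxx conj_res0 /state_pairing (negPf se).
  exact: (@arith _ _ _ _ _ _ _ E1 E2 E3).
have cnt (P : pred {set dart N}) : #|[set T | P T]| = (\sum_T (P T : nat))%N.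
  by rewrite -sum1dep_card big_mkcond; apply: eq_bigr => T _; case: (P T).
have E2 : n2factors (ih_ed e ed) (@all_matching N)
    = #|[set T | is_2factor (ih_ed e ed) (@all_matching N) (Psi N e T)]|.
  rewrite /n2factors -(card_imset _ (can_inj (PhiK N e))).
  apply: eq_card => S; rewrite [RHS]inE; apply/imsetP/idP => [[T H ->]|H].
    by rewrite inE in H; rewrite PhiK.
  by exists (Psi N e S); rewrite ?inE // PsiK.
have key : (n2factors ed (@all_matching N) + n2factors ed (arcs_at e pairEq)
   = n2factors (ih_ed e ed) (@all_matching N) + n2factors ed (arcs_at e res0))%N.
  rewrite E2 /n2factors !cnt -!big_split; apply: eq_bigr => T _.
  rewrite (f1E _ _ e) f2E f3E f4E /=.
  by case: (cl N ed T); case: (rest N e T); case: ((e,pA) \in T); case: ((e,pB) \in T);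
    case: ((e,pD) \in T); case: ((e,pG) \in T).
lia.
Qed.
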